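(* Let $G=(V,E)$ be a graph with $V=[n]$ and no self-loops, and let $q_G(x)=\sum_{\{i,j\}\in E}a_{ij}x_ix_j+\sum_{i\in V}c_ix_i+c_0$ be positive on $[0,1]^n$. Let \[ \mathcal{G}_G=\Bigl\{\frac{(1,x,z)}{q_G(x)}\Bigm| x\in[0,1]^n,\ z_{ij}=x_ix_j\ \text{for }\{i,j\}\in E\Bigr\}. \] Then \[ \operatorname{conv}(\mathcal{G}_G)=\Bigl\{(\rho,y,w)\Bigm| (y,w)\in\rho\,\mathrm{QP}_G,\ \rho\ge0,\ \sum_{\{i,j\}\in E}a_{ij}w_{ij}+\sum_{i\in V}c_iy_i+c_0\rho=1\Bigr\}, \] and $\mathrm{QP}_G=\{(x,z)\mid (1,x,z)\in\sigma\operatorname{conv}(\mathcal{G}_G),\ \sigma\ge0\}$.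
   Context: The boolean quadric polytope $\mathrm{QP}_G$ is the convex hull of $\{(x,z)\in\mathbb{R}^{|V|+|E|}\mid x\in\{0,1\}^{|V|},\ z_{ij}=x_ix_j\ \text{for }\{i,j\}\in E\}$. For a set $K$, $\lambda K=\{\lambda k\mid k\in K\}$ for $\lambda>0$ and $0K$ is the recession cone of $K$. *)

(* Defs.v *)
From HB Require Import structures.
From mathcomp Require Import all_boot all_order all_algebra.
From mathcomp Require Import classical_sets reals.
Set Implicit Arguments. Unset Strict Implicit. Unset Printing Implicit Defensive.
Import Order.TTheory GRing.Theory Num.Theory.
Local Open Scope ring_scope.
Local Open Scope classical_set_scope.

(* Edges of a graph on [n] = 'I_n : E is a set of 2-element subsets of 'I_n.
   The coordinate type of edges is the finite subtype of E. *)
Definition edge (n : nat) (E : {set {set 'I_n}}) := {e : {set 'I_n} | e \in E}.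

Definition conv (R : realType) (I : Type) (S : set (I -> R)) : set (I -> R) :=
  [set p | exists (k : nat) (lam : 'I_k -> R) (pts : 'I_k -> I -> R),
     (forall j, 0 <= lam j) /\ \sum_(j < k) lam j = 1 /\
     (forall j, S (pts j)) /\ p = (fun c => \sum_(j < k) lam j * pts j c)].

Definition rec_cone (R : realType) (I : Type) (K : set (I -> R)) : set (I -> R) :=
  [set d | forall k, K k -> forall t : R, 0 <= t -> K (fun c => k c + t * d c)].

(* lambda K = {lambda k | k in K} for lambda > 0, and 0 K = recession cone of K
   (only used for lambda >= 0). *)
Definition scaleset (R : realType) (I : Type) (lam : R) (K : set (I -> R))
  : set (I -> R) :=
  if 0 < lam then [set (fun c => lam * k c) | k in K] else rec_cone K.

Definition liftxz (R : realType) (n : nat) (E : {set {set 'I_n}})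
  (x : 'I_n -> R) : 'I_n + edge E -> R :=
  fun c => match c with
           | inl i => x i
           | inr e => \prod_(i in val e) x i
           end.

Definition QP (R : realType) (n : nat) (E : {set {set 'I_n}}) : set ('I_n + edge E -> R) :=
  conv [set p | exists x : 'I_n -> R, (forall i, x i = 0 \/ x i = 1) /\ p = @liftxz R n E x].

Definition qG (R : realType) (n : nat) (E : {set {set 'I_n}})
  (a : edge E -> R) (c : 'I_n -> R) (c0 : R) (x : 'I_n -> R) : R :=
  \sum_(e : edge E) a e * \prod_(i in val e) x i + \sum_(i < n) c i * x i + c0.

(* The point (1, u) in R^{1 + n + |E|}; coordinate None is the first one. *)
Definition cons1 (R : realType) (I : Type) (u : I -> R) : option I -> R :=
  fun c => match c with None => 1 | Some d => u d end.

Definition GG (R : realType) (n : nat) (E : {set {set 'I_n}})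
  (a : edge E -> R) (c : 'I_n -> R) (c0 : R) : set (option ('I_n + edge E) -> R) :=
  [set p | exists x : 'I_n -> R, (forall i, 0 <= x i <= 1) /\
     p = (fun d => cons1 (@liftxz R n E x) d / qG a c c0 x)].

(* Main.v *)
Require Import Defs.
From HB Require Import structures.
From mathcomp Require Import all_boot all_order all_algebra.
From mathcomp Require Import classical_sets reals boolp.
From mathcomp Require Import ring lra.
Import Order.TTheory GRing.Theory Num.Theory.
Local Open Scope ring_scope.
Local Open Scope classical_set_scope.
Set Implicit Arguments. Unset Strict Implicit. Unset Printing Implicit Defensive.

Definition vx (R : realType) n (b : {ffun 'I_n -> bool}) : 'I_n -> R :=
  fun i => (b i)%:R.
Definition wt (R : realType) n (x : 'I_n -> R) (b : {ffun 'I_n -> bool}) : R :=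
  \prod_i (if b i then x i else 1 - x i).

Lemma expand_prod (R : realType) n (x : 'I_n -> R) (S : {set 'I_n}) :
  \sum_(b : {ffun 'I_n -> bool}) wt x b * \prod_(i in S) vx R b i
  = \prod_(i in S) x i.
Proof.
have -> : \prod_(i in S) x i = \prod_i \sum_(bb : bool)
   ((if bb then x i else 1 - x i) * (if i \in S then (bb%:R : R) else 1)).
  rewrite big_mkcond /=; apply: eq_bigr => i _; rewrite big_bool /=.
  by case: (i \in S); rewrite ?mulr1 ?mulr0 ?addr0 // addrC subrK.
rewrite bigA_distr_bigA /=; apply: eq_bigr => b _.
rewrite /wt /vx (big_mkcond (mem S)) -big_split /=; apply: eq_bigr => i _.
by case: (b i); case: (i \in S); rewrite /= ?mulr1 ?mulr0.
Qed.

Lemma wt_sum (R : realType) n (x : 'I_n -> R) :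
  \sum_(b : {ffun 'I_n -> bool}) wt x b = 1.
Proof.
have := expand_prod x (finset.set0).
rewrite big_set0 => <-; apply: eq_bigr => b _; by rewrite big_set0 mulr1.
Qed.

Lemma wt_ge0 (R : realType) n (x : 'I_n -> R) b :
  (forall i, 0 <= x i <= 1) -> 0 <= wt x b.
Proof.
move=> hx; apply: prodr_ge0 => i _; have /andP[h0 h1] := hx i.
by case: (b i); rewrite // subr_ge0.
Qed.


Lemma sum_enum (R : realType) (B : finType) (F : B -> R) :
  \sum_(b : B) F b = \sum_(j < #|B|) F (enum_val j).
Proof.
rewrite -(big_enum_val (A := B)); apply: eq_bigl => b; by rewrite inE.
Qed.

Lemma conv_fin (R : realType) (I : Type) (S : set (I -> R)) (B : finType)
  (mu : B -> R) (pts : B -> I -> R) :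
  (forall b, 0 <= mu b) -> \sum_b mu b = 1 -> (forall b, S (pts b)) ->
  conv S (fun c => \sum_b mu b * pts b c).
Proof.
move=> h0 h1 hS; exists #|B|, (fun j => mu (enum_val j)), (fun j => pts (enum_val j)).
split=> //; split; first by rewrite -sum_enum.
split=> //; apply: funext => c; by rewrite sum_enum.
Qed.

Lemma lift_expand (R : realType) n (E : {set {set 'I_n}}) (x : 'I_n -> R) :
  @liftxz R n E x = (fun d => \sum_(b : {ffun 'I_n -> bool}) wt x b * @liftxz R n E (vx R b) d).
Proof.
apply: funext => -[i|e] /=.
  have := expand_prod x [set i]; rewrite big_set1 => <-.
  by apply: eq_bigr => b _; rewrite big_set1.
by rewrite expand_prod.
Qed.

Lemma lift_QP (R : realType) n (E : {set {set 'I_n}}) (x : 'I_n -> R) :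
  (forall i, 0 <= x i <= 1) -> @QP R n E (@liftxz R n E x).
Proof.
move=> hx; rewrite lift_expand; apply: conv_fin.
- by move=> b; apply: wt_ge0.
- exact: wt_sum.
- move=> b; exists (vx R b); split=> // i; rewrite /vx; case: (b i); auto.
Qed.

Definition Lf (R : realType) n (E : {set {set 'I_n}}) (a : edge E -> R) (c : 'I_n -> R)
  (v : 'I_n + edge E -> R) : R :=
  \sum_(e : edge E) a e * v (inr e) + \sum_(i < n) c i * v (inl i).

Lemma qG_Lf (R : realType) n (E : {set {set 'I_n}}) (a : edge E -> R) (c : 'I_n -> R) c0 x :
  qG a c c0 x = Lf a c (@liftxz R n E x) + c0.
Proof. by []. Qed.

Lemma Lf_sum (R : realType) n (E : {set {set 'I_n}}) (a : edge E -> R) (c : 'I_n -> R)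
  (J : finType) (al : J -> R) (v : J -> 'I_n + edge E -> R) :
  Lf a c (fun d => \sum_j al j * v j d) = \sum_j al j * Lf a c (v j).
Proof.
rewrite /Lf; under [RHS]eq_bigr do rewrite mulrDr.
rewrite big_split /=; congr (_ + _).
  under eq_bigr do rewrite mulr_sumr; rewrite exchange_big /=.
  by apply: eq_bigr => j _; rewrite mulr_sumr; apply: eq_bigr => e _; rewrite mulrCA.
under eq_bigr do rewrite mulr_sumr; rewrite exchange_big /=.
by apply: eq_bigr => j _; rewrite mulr_sumr; apply: eq_bigr => e _; rewrite mulrCA.
Qed.

Lemma Lf_scale (R : realType) n (E : {set {set 'I_n}}) (a : edge E -> R) (c : 'I_n -> R)
  r (v : 'I_n + edge E -> R) :
  Lf a c (fun d => r * v d) = r * Lf a c v.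
Proof.
rewrite /Lf mulrDr !mulr_sumr; congr (_ + _); apply: eq_bigr => e _; by rewrite mulrCA.
Qed.


Definition mB (R : realType) n (E : {set {set 'I_n}}) (a : edge E -> R) (c : 'I_n -> R) c0 :=
  (\sum_(b : {ffun 'I_n -> bool}) (qG a c c0 (vx R b))^-1)^-1.

Lemma vx_01 (R : realType) n b (i : 'I_n) : 0 <= vx R b i <= 1.
Proof. by rewrite /vx; case: (b i); rewrite /= ?lexx ?ler01. Qed.

Lemma mB_props (R : realType) n (E : {set {set 'I_n}}) (a : edge E -> R) (c : 'I_n -> R) c0 :
  (forall x : 'I_n -> R, (forall i, 0 <= x i <= 1) -> 0 < qG a c c0 x) ->
  0 < mB a c c0 /\ forall b, mB a c c0 <= qG a c c0 (vx R b).
Proof.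
move=> hq.
have hpos b : 0 < (qG a c c0 (vx R b))^-1 by rewrite invr_gt0; apply: hq => i; apply: vx_01.
have hle b : (qG a c c0 (vx R b))^-1 <= \sum_(b : {ffun 'I_n -> bool}) (qG a c c0 (vx R b))^-1.
  rewrite (bigD1 b) //= lerDl; apply: sumr_ge0 => b' _; exact: ltW.
have hS : 0 < \sum_(b : {ffun 'I_n -> bool}) (qG a c c0 (vx R b))^-1.
  exact: (lt_le_trans (hpos [ffun=> false]) (hle _)).
split; first by rewrite /mB invr_gt0.
move=> b; rewrite /mB.
rewrite -[qG a c c0 (vx R b)]invrK lef_pV2 ?posrE //; exact: hle.
Qed.

Lemma binary_vx (R : realType) n (x : 'I_n -> R) :
  (forall i, x i = 0 \/ x i = 1) -> x = vx R [ffun i => x i == 1].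
Proof.
move=> hx; apply: funext => i; rewrite /vx ffunE.
by case: (hx i) => ->; rewrite ?eqxx // eq_sym oner_eq0.
Qed.

Lemma QP_bounds (R : realType) n (E : {set {set 'I_n}}) v :
  @QP R n E v -> forall d, 0 <= v d <= 1.
Proof.
move=> [k [lam [pts [h0 [h1 [hS ->]]]]]] d.
have hp j : 0 <= pts j d <= 1.
  have [x [hx ->]] := hS j.
  case: d => [i|e] /=.
    by case: (hx i) => ->; rewrite ?lexx ?ler01.
  apply/andP; split; [apply: prodr_ge0|apply: prodr_ile1] => i _;
    by case: (hx i) => ->; rewrite ?lexx ?ler01.
apply/andP; split.
  apply: sumr_ge0 => j _; apply: mulr_ge0 => //; by case/andP: (hp j).
rewrite -h1; apply: ler_sum => j _; rewrite ler_piMr //; by case/andP: (hp j).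
Qed.

Lemma QP_Lf (R : realType) n (E : {set {set 'I_n}}) (a : edge E -> R) (c : 'I_n -> R) c0 v :
  (forall x : 'I_n -> R, (forall i, 0 <= x i <= 1) -> 0 < qG a c c0 x) ->
  @QP R n E v -> mB a c c0 <= Lf a c v + c0.
Proof.
move=> hq [k [lam [pts [h0 [h1 [hS ->]]]]]].
have [_ hm] := mB_props hq.
rewrite Lf_sum -{2}(mul1r c0) -h1 mulr_suml -big_split /=.
rewrite -[mB a c c0]mul1r -h1 mulr_suml; apply: ler_sum => j _.
rewrite -mulrDr; apply: ler_wpM2l => //.
have [x [hx ->]] := hS j.
rewrite -qG_Lf (binary_vx hx); exact: hm.
Qed.


Lemma QP_combo (R : realType) n (E : {set {set 'I_n}}) (J : finType)
  (be : J -> R) (xs : J -> 'I_n -> R) :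
  (forall j, 0 <= be j) -> \sum_j be j = 1 -> (forall j i, 0 <= xs j i <= 1) ->
  @QP R n E (fun d => \sum_j be j * @liftxz R n E (xs j) d).
Proof.
move=> hb hs hx.
have -> : (fun d => \sum_j be j * @liftxz R n E (xs j) d) =
  (fun d => \sum_(b : {ffun 'I_n -> bool}) (\sum_j be j * wt (xs j) b) * @liftxz R n E (vx R b) d).
  apply: funext => d.
  under eq_bigr => j _ do rewrite (lift_expand E (xs j)) mulr_sumr.
  rewrite exchange_big /=; apply: eq_bigr => b _; rewrite mulr_suml.
  by apply: eq_bigr => j _; rewrite mulrA.
apply: conv_fin.
- move=> b; apply: sumr_ge0 => j _; apply: mulr_ge0 => //; exact: wt_ge0.
- rewrite exchange_big /= -hs; apply: eq_bigr => j _; by rewrite -mulr_sumr wt_sum mulr1.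
- move=> b; exists (vx R b); split=> // i; rewrite /vx; case: (b i); auto.
Qed.

Lemma combo_RHS (R : realType) n (E : {set {set 'I_n}}) (a : edge E -> R) (c : 'I_n -> R) c0
  (J : finType) (be : J -> R) (xs : J -> 'I_n -> R) p :
  (forall j, 0 <= be j) -> (forall j i, 0 <= xs j i <= 1) ->
  \sum_j be j * qG a c c0 (xs j) = 1 ->
  p = (fun d => \sum_j be j * cons1 (@liftxz R n E (xs j)) d) ->
  0 < p None /\ scaleset (p None) (@QP R n E) (fun d => p (Some d)) /\
  Lf a c (fun d => p (Some d)) + c0 * p None = 1.
Proof.
move=> hb hx hs ->.
have pN : \sum_j be j * cons1 (@liftxz R n E (xs j)) None = \sum_j be j.
  by apply: eq_bigr => j _; rewrite /= mulr1.
rewrite pN /=.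
have hrho : 0 < \sum_j be j.
  rewrite lt_def sumr_ge0 // andbT; apply/eqP => h0.
  have hz := psumr_eq0P (fun j _ => hb j) h0.
  move: hs; rewrite big1 => [/eqP|j _]; first by rewrite eq_sym oner_eq0.
  by rewrite hz // mul0r.
split=> //; split.
  rewrite /scaleset hrho.
  exists (fun d => \sum_j ((\sum_j be j)^-1 * be j) * @liftxz R n E (xs j) d).
    apply: QP_combo => //.
      by move=> j; apply: mulr_ge0 => //; rewrite invr_ge0 ltW.
    by rewrite -mulr_sumr mulVf // gt_eqF.
  apply: funext => d; rewrite mulr_sumr; apply: eq_bigr => j _.
  by rewrite !mulrA mulfV ?mul1r // gt_eqF.
rewrite Lf_sum -hs mulr_sumr -big_split /=; apply: eq_bigr => j _.
rewrite qG_Lf; ring.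
Qed.

Lemma conv_RHS (R : realType) n (E : {set {set 'I_n}}) (a : edge E -> R) (c : 'I_n -> R) c0 p :
  (forall x : 'I_n -> R, (forall i, 0 <= x i <= 1) -> 0 < qG a c c0 x) ->
  conv (GG a c c0) p ->
  0 < p None /\ scaleset (p None) (@QP R n E) (fun d => p (Some d)) /\
  Lf a c (fun d => p (Some d)) + c0 * p None = 1.
Proof.
move=> hq [K [lam [pts [h0 [h1 [hS ->]]]]]].
have [xs hxs] := choice hS.
have hqj j : 0 < qG a c c0 (xs j) by apply: hq; case: (hxs j).
refine (@combo_RHS R n E a c c0 _ (fun j => lam j / qG a c c0 (xs j)) xs (fun d => \sum_(j < K) lam j * pts j d) _ _ _ _).
- by move=> j; rewrite divr_ge0 // ltW.
- by move=> j; case: (hxs j).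
- rewrite -h1; apply: eq_bigr => j _; by rewrite divfK // gt_eqF.
- apply: funext => d; apply: eq_bigr => j _; rewrite (proj2 (hxs j)).
  by rewrite mulrA mulrAC.
Qed.

Lemma RHS_conv (R : realType) n (E : {set {set 'I_n}}) (a : edge E -> R) (c : 'I_n -> R) c0 p :
  (forall x : 'I_n -> R, (forall i, 0 <= x i <= 1) -> 0 < qG a c c0 x) ->
  0 < p None -> scaleset (p None) (@QP R n E) (fun d => p (Some d)) ->
  Lf a c (fun d => p (Some d)) + c0 * p None = 1 ->
  conv (GG a c c0) p.
Proof.
move=> hq hrho; rewrite /scaleset hrho.
case=> _ [K [mu [pts [h0 [h1 [hS ->]]]]]] hkp heq.
have [xs hxs] := choice hS.
have hx01 j i : 0 <= xs j i <= 1.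
  by case: (proj1 (hxs j) i) => ->; rewrite ?lexx ?ler01.
have hqj j : 0 < qG a c c0 (xs j) by apply: hq; apply: hx01.
exists K, (fun j => mu j * p None * qG a c c0 (xs j)),
  (fun j d => cons1 (@liftxz R n E (xs j)) d / qG a c c0 (xs j)).
split; first by move=> j; rewrite !mulr_ge0 // ltW.
split.
  rewrite -heq -hkp Lf_scale Lf_sum.
  rewrite -[in RHS](mul1r (c0 * _)) -h1 !mulr_suml mulr_sumr -big_split /=.
  apply: eq_bigr => j _; rewrite (proj2 (hxs j)) qG_Lf; ring.
split; first by move=> j; exists (xs j); split.
apply: funext => -[d|] /=.
  have := congr1 (fun f => f d) hkp => /= <-.
  rewrite mulr_sumr; apply: eq_bigr => j _; rewrite (proj2 (hxs j)).
  by field; rewrite gt_eqF.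
rewrite (eq_bigr (fun j => mu j * p None)); last first.
  by move=> j _ /=; field; rewrite gt_eqF.
by rewrite -mulr_suml h1 mul1r.
Qed.


Lemma rec_QP_zero (R : realType) n (E : {set {set 'I_n}}) d :
  rec_cone (@QP R n E) d -> d = (fun _ => 0).
Proof.
move=> hd; apply: funext => c'.
have hk0 : @QP R n E (@liftxz R n E (fun _ => 0)).
  by apply: lift_QP => i; rewrite lexx ler01.
set k0 := @liftxz R n E (fun _ => 0) in hk0.
have hb := QP_bounds hk0 c'.
case: (ltrgtP (d c') 0) => // hdc.
  have ht : 0 <= -2 / d c' by apply: mulr_le0; [lra | rewrite invr_le0 ltW].
  have := QP_bounds (hd _ hk0 (- 2 / d c') ht) c'.
  rewrite /= divfK ?lt_eqF //.
  move=> h; exfalso; case/andP: h => h1 h2; case/andP: hb => h3 h4; lra.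
have ht : 0 <= 2 / d c' by rewrite divr_ge0 // ltW.
have := QP_bounds (hd _ hk0 (2 / d c') ht) c'.
rewrite /= divfK ?gt_eqF //.
move=> h; exfalso; case/andP: h => h1 h2; case/andP: hb => h3 h4; lra.
Qed.

Unset Implicit Arguments.

Theorem proposition2 (R : realType) (n : nat) (E : {set {set 'I_n}})
  (a : edge E -> R) (c : 'I_n -> R) (c0 : R) :
  (forall e, e \in E -> #|e| = 2%N) ->
  (forall x : 'I_n -> R, (forall i, 0 <= x i <= 1) -> 0 < qG a c c0 x) ->
  conv (GG a c c0) =
    [set p : option ('I_n + edge E) -> R | 0 <= p None /\
       scaleset (p None) (@QP R n E) (fun d => p (Some d)) /\
       \sum_(e : edge E) a e * p (Some (inr e)) + \sum_(i < n) c i * p (Some (inl i))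
         + c0 * p None = 1]
  /\ @QP R n E = [set u | exists sigma : R, 0 <= sigma /\
                         scaleset sigma (conv (GG a c c0)) (cons1 u)].
Proof.
move=> _ hq.
have [hm0 _] := mB_props hq.
have claim1 : conv (GG a c c0) =
    [set p : option ('I_n + edge E) -> R | 0 <= p None /\
       scaleset (p None) (@QP R n E) (fun d => p (Some d)) /\
       \sum_(e : edge E) a e * p (Some (inr e)) + \sum_(i < n) c i * p (Some (inl i))
         + c0 * p None = 1].
  apply/seteqP; split => p /=.
    move=> hp; have [h1 [h2 h3]] := conv_RHS hq hp.
    by split; [exact: ltW | split].
  case=> h0 [hsc heq].
  move: h0; rewrite le_eqVlt => /orP[/eqP hz|hpos].
    move: hsc; rewrite /scaleset -hz ltxx => /rec_QP_zero hd.
    exfalso; move: heq; rewrite -hz mulr0 addr0.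
    change (Lf a c (fun d => p (Some d)) <> 1).
    rewrite hd (_ : (fun _ => 0) = (fun d => 0 * p (Some d))); last first.
      by apply: funext => d; rewrite mul0r.
    by rewrite Lf_scale mul0r => /eqP; rewrite eq_sym oner_eq0.
  exact: RHS_conv hq hpos hsc heq.
split=> //.
apply/seteqP; split => u /=.
  move=> hu.
  have hs := QP_Lf hq hu.
  set s := Lf a c u + c0 in hs.
  have spos : 0 < s by exact: lt_le_trans hm0 hs.
  exists s; split; first exact: ltW.
  rewrite /scaleset spos.
  exists (fun d => cons1 u d / s); last first.
    by apply: funext => d; rewrite mulrC divfK // gt_eqF.
  apply: RHS_conv => //=.
  - by rewrite div1r invr_gt0.
  - rewrite /scaleset div1r invr_gt0 spos.
    by exists u => //; apply: funext => d; rewrite mulrC.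
  - rewrite (_ : (fun d => u d / s) = (fun d => s^-1 * u d)); last first.
      by apply: funext => d; rewrite mulrC.
    rewrite Lf_scale; move: spos; rewrite /s => sp; field; by rewrite gt_eqF.
case=> sigma [hs0 hsc].
move: hs0; rewrite le_eqVlt => /orP[/eqP hz|hpos].
  exfalso; move: hsc; rewrite /scaleset -hz ltxx => hrec.
  set g0 := (fun d => cons1 (@liftxz R n E (fun _ => 0)) d / qG a c c0 (fun _ => 0)).
  have hk0 : conv (GG a c c0) (fun d => \sum_(b : unit) 1 * g0 d).
    apply: conv_fin => //; first by rewrite big_const card_unit /= ?addr0.
    by move=> _; exists (fun _ => 0); split=> // i; rewrite lexx ler01.
  have hk0N := proj1 (conv_RHS hq hk0).
  set t := (mB a c c0)^-1 + 1.
  have ht : 0 <= t by rewrite /t addr_ge0 // invr_ge0 ltW.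
  have [hN [hS hL]] := conv_RHS hq (hrec _ hk0 t ht).
  move: hN hS hL => /=.
  set k := (\sum_(b : unit) 1 * g0 _).
  set rho := k + t * 1 => hN.
  rewrite /scaleset hN; case=> v hv hvk.
  rewrite -hvk Lf_scale => hL.
  have hLv := QP_Lf hq hv.
  have htm : t * mB a c c0 = 1 + mB a c c0.
    by rewrite /t; field; rewrite gt_eqF.
  have hk : 0 < k by [].
  have : rho * mB a c c0 <= rho * (Lf a c v + c0) by rewrite ler_wpM2l // ltW.
  have : t * mB a c c0 <= rho * mB a c c0.
    by rewrite ler_wpM2r ?ltW // /rho mulr1 -subr_gt0 addrK.
  nra.
rewrite /scaleset hpos in hsc; case: hsc => k hk hku.
have [hkN [hkS _]] := conv_RHS hq hk.
have e1 : sigma * k None = 1 by have := congr1 (fun f => f None) hku.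
move: hkS; rewrite /scaleset hkN; case=> v hv hvk.
suff -> : u = v by [].
apply: funext => c'.
have := congr1 (fun f => f (Some c')) hku => /= <-.
have := congr1 (fun f => f c') hvk => /= <-.
by rewrite mulrA e1 mul1r.
Qed.
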